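(* For every integer $n\geq 1$, $$\sum_{k=1}^{n}\bar B_{2k}\bar B_{2n-2k}=\frac{1}{n+1}\sum_{k=1}^{n}B_{2k}\bar B_{2n-2k}\binom{2n+2}{2k+2}+2n\bar B_{2n}.$$
   Context: $B_n$ denotes the Bernoulli numbers, defined by $\frac{x}{e^x-1}=\sum_{n\ge 0}B_n\frac{x^n}{n!}$ (so $B_0=1$). $\bar B_n:=\frac{1-2^{n-1}}{2^{n-1}}B_n$ (so $\bar B_0=1$). *)

(* Defs.v *)
From mathcomp Require Import all_boot all_order all_algebra.
Set Implicit Arguments. Unset Strict Implicit. Unset Printing Implicit Defensive.
Import Order.TTheory GRing.Theory Num.Theory.
Local Open Scope ring_scope.

(* Bernoulli numbers (B_1 = -1/2 convention, from x/(e^x-1)), computed by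
   the recurrence obtained by comparing coefficients in
   ((e^x - 1)/x) * (sum_n B_n x^n/n!) = 1, i.e.
   sum_(k <= n) C(n+1,k) B_k = 0 for n >= 1, B_0 = 1. *)
Fixpoint bern_list (n : nat) : seq rat :=
  match n with
  | 0%N => [:: 1]
  | m.+1 =>
      let l := bern_list m in
      rcons l (- (m.+2%:R)^-1 * \sum_(k < m.+2) 'C(m.+2, k)%:R * l`_k)
  end.

Definition bernoulli (n : nat) : rat := (bern_list n)`_n.

Definition bernoulli_bar (n : nat) : rat :=
  (1 - (2%:Q) ^ (n%:Z - 1)) / (2%:Q) ^ (n%:Z - 1) * bernoulli n.

(* Main.v *)
Require Import Defs.
From mathcomp Require Import all_boot all_order all_algebra.
From mathcomp Require Import ring lra zify.
Import GRing.Theory Num.Theory.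
Local Open Scope ring_scope.

Lemma deriv_eq0_const (q : {poly rat}) : q^`() = 0 -> q = (q`_0)%:P.
Proof.
move=> H; apply/polyP => i; rewrite coefC; case: i => [|i] //=.
have := congr1 (fun p : {poly rat} => p`_i) H.
rewrite coef_deriv coef0 => /eqP; rewrite -mulr_natr mulf_eq0 pnatr_eq0 orbF.
by move/eqP.
Qed.

Lemma same_deriv (p q : {poly rat}) (a b : rat) :
  p^`() = q^`() -> p.[a] - p.[b] = q.[a] - q.[b].
Proof.
move=> H; have /deriv_eq0_const E : (p - q)^`() = 0 by rewrite derivB H subrr.
have : (p - q).[a] = (p - q).[b] by rewrite E !hornerC.
rewrite !hornerE => /eqP; rewrite -subr_eq0 => /eqP H2.
by apply/eqP; rewrite -subr_eq0; apply/eqP; rewrite -H2; ring.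
Qed.

Definition prim (q : {poly rat}) : {poly rat} :=
  \sum_(i < size q) (q`_i / i.+1%:R) *: 'X^(i.+1).

Lemma prim_deriv q : (prim q)^`() = q.
Proof.
rewrite /prim raddf_sum /=.
rewrite -[RHS]coefK poly_def; apply: eq_bigr => i _.
rewrite derivZ derivXn /= -scaler_nat scalerA; congr (_ *: _).
by rewrite mulrAC -mulrA divff ?mulr1 // pnatr_eq0.
Qed.

Definition I (q : {poly rat}) : rat := (prim q).[1] - (prim q).[0].

Lemma I_deriv q : I (q^`()) = q.[1] - q.[0].
Proof. by apply: same_deriv; rewrite prim_deriv. Qed.

Lemma I_add p q : I (p + q) = I p + I q.
Proof.
have := @same_deriv (prim (p + q)) (prim p + prim q) 1 0.
rewrite derivD !prim_deriv ; rewrite /I => /(_ erefl) ->; rewrite !hornerD; ring.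
Qed.

Lemma I_scale c p : I (c *: p) = c * I p.
Proof.
have := @same_deriv (prim (c *: p)) (c *: prim p) 1 0.
rewrite derivZ !prim_deriv ; rewrite /I => /(_ erefl) ->; rewrite !hornerZ; ring.
Qed.

Lemma I0 : I 0 = 0.
Proof. apply: (@addrI _ (I 0)); by rewrite -I_add !addr0. Qed.

Lemma I_sum (T : Type) (r : seq T) (P : pred T) (F : T -> {poly rat}) :
  I (\sum_(i <- r | P i) F i) = \sum_(i <- r | P i) I (F i).
Proof. exact: (big_morph I I_add I0). Qed.

Lemma I_const c : I c%:P = c.
Proof.
have -> : c%:P = (c *: 'X)^`() by rewrite derivZ derivX alg_polyC.
by rewrite I_deriv !hornerZ !hornerX; ring.
Qed.

Lemma I_subst q (a b : rat) : a != 0 ->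
  I (q \Po (a *: 'X + b%:P)) = ((prim q).[a + b] - (prim q).[b]) / a.
Proof.
move=> a0.
have E : q \Po (a *: 'X + b%:P) = a^-1 *: (prim q \Po (a *: 'X + b%:P))^`().
  rewrite deriv_comp prim_deriv derivD derivZ derivX derivC addr0 alg_polyC.
  by rewrite mulrC mul_polyC scalerA mulVf // scale1r.
rewrite E I_scale I_deriv !horner_comp !hornerE.
field; exact: a0.
Qed.

Lemma size_bern_list m : size (bern_list m) = m.+1.
Proof. by elim: m => [|m IH] //=; rewrite size_rcons IH. Qed.

Lemma bern_list_nth m k : (k <= m)%N -> (bern_list m)`_k = bernoulli k.
Proof.
elim: m => [|m IH] Hk.
  by rewrite leqn0 in Hk; rewrite (eqP Hk).
rewrite leq_eqVlt in Hk; case/orP: Hk => [/eqP ->|Hk]; first by [].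
by rewrite /= nth_rcons size_bern_list Hk IH.
Qed.

Lemma bern_rec m : \sum_(k < m.+2) 'C(m.+2, k)%:R * bernoulli k = 0.
Proof.
rewrite big_ord_recr /=.
have E : bernoulli m.+1 = - (m.+2%:R)^-1 *
   \sum_(k < m.+2) 'C(m.+2, k)%:R * (bern_list m)`_k.
  by rewrite /bernoulli /= nth_rcons size_bern_list ltnn eqxx.
have E2 : \sum_(k < m.+2) 'C(m.+2, k)%:R * (bern_list m)`_k
   = \sum_(k < m.+1) 'C(m.+2, k)%:R * bernoulli k.
  rewrite big_ord_recr /= nth_default ?size_bern_list // mulr0 addr0.
  by apply: eq_bigr => i _; rewrite bern_list_nth // -ltnS.
rewrite E E2 binSn.
have H : (m.+2%:R : rat) != 0 by rewrite pnatr_eq0.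
set s := \sum_(k < m.+1) _.
by rewrite mulrA mulrN divff // mulN1r addrN.
Qed.

Definition Bp (p : nat) : {poly rat} :=
  \sum_(k < p.+1) ('C(p, k)%:R * bernoulli k) *: 'X^(p - k).

Lemma Bp0 : Bp 0 = 1.
Proof. by rewrite /Bp big_ord1 /= bin0 mul1r subnn expr0 /bernoulli /= scale1r. Qed.

Lemma Bp_at0 p : (Bp p).[0] = bernoulli p.
Proof.
rewrite /Bp horner_sum big_ord_recr /= big1 ?add0r.
  by rewrite hornerZ hornerXn subnn expr0 mulr1 binn mul1r.
move=> i _; rewrite hornerZ hornerXn expr0n.
by rewrite subn_eq0 leqNgt ltn_ord /= mulr0.
Qed.

Lemma Bp_at1 p : (Bp p).[1] = \sum_(k < p.+1) 'C(p, k)%:R * bernoulli k.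
Proof.
rewrite /Bp horner_sum; apply: eq_bigr => i _.
by rewrite hornerZ hornerXn expr1n mulr1.
Qed.

Lemma Bp_diff p : (Bp p).[1] - (Bp p).[0] = (p == 1%N)%:R.
Proof.
rewrite Bp_at1 Bp_at0; case: p => [|[|m]].
- by rewrite big_ord1 /= subrr.
- by rewrite big_ord_recr big_ord1 /= bin0 binn !mul1r addrK.
- by rewrite big_ord_recr /= bern_rec add0r binn mul1r subrr.
Qed.

Lemma Bp_deriv p : (Bp p.+1)^`() = p.+1%:R *: Bp p.
Proof.
rewrite /Bp raddf_sum /= big_ord_recr /= subnn derivZ derivXn /= mulr0n scaler0 addr0.
rewrite scaler_sumr; apply: eq_bigr => i _.
rewrite derivZ derivXn scalerA -scaler_nat scalerA.
have Hi : (i <= p)%N by rewrite -ltnS.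
rewrite subSn // /=; congr (_ *: _).
have := mul_bin_down p.+1 i; rewrite /= subSn // => H.
by rewrite mulrAC -natrM mulnC -H natrM mulrA.
Qed.

Lemma I_sub p q : I (p - q) = I p - I q.
Proof. by rewrite I_add -scaleN1r I_scale mulN1r. Qed.

Lemma I_Bp p : I (Bp p) = (p == 0%N)%:R.
Proof.
case: p => [|p]; first by rewrite Bp0 -polyC1 I_const.
have H : (p.+2%:R : rat) != 0 by rewrite pnatr_eq0.
have -> : Bp p.+1 = (p.+2%:R)^-1 *: (Bp p.+2)^`().
  by rewrite Bp_deriv scalerA mulVf // scale1r.
by rewrite I_scale I_deriv Bp_diff /= mulr0.
Qed.

Lemma appell_uniq (P Q : nat -> {poly rat}) (c : nat -> rat) :
  P 0%N = Q 0%N ->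
  (forall m, (P m.+1)^`() = c m *: P m) ->
  (forall m, (Q m.+1)^`() = c m *: Q m) ->
  (forall m, I (P m) = I (Q m)) -> forall m, P m = Q m.
Proof.
move=> H0 HP HQ HI; elim=> // m IH.
have D : (P m.+1 - Q m.+1)^`() = 0 by rewrite derivB HP HQ IH subrr.
move/deriv_eq0_const: D => D.
have : I (P m.+1 - Q m.+1) = 0 by rewrite I_sub HI subrr.
rewrite D I_const => E; rewrite E in D.
by apply/eqP; rewrite -subr_eq0 D.
Qed.

Lemma deriv_comp_aff (q : {poly rat}) (a b : rat) :
  (q \Po (a *: 'X + b%:P))^`() = a *: (q^`() \Po (a *: 'X + b%:P)).
Proof.
by rewrite deriv_comp derivD derivZ derivX derivC addr0 alg_polyC mulrC mul_polyC.
Qed.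

Lemma I_as_prim q : I q = (prim q).[1] - (prim q).[0].
Proof. by []. Qed.

Definition symB (p : nat) : {poly rat} :=
  (-1) ^+ p *: (Bp p \Po ((-1 : rat) *: 'X + 1%:P)).

Lemma symB_eq p : symB p = Bp p.
Proof.
apply: (@appell_uniq symB Bp (fun m => m.+1%:R)).
- by rewrite /symB Bp0 expr0 scale1r -polyC1 comp_polyC.
- move=> m; rewrite /symB derivZ deriv_comp_aff Bp_deriv comp_polyZ !scalerA.
  by congr (_ *: _); rewrite exprS mulN1r mulrN1 opprK mulrC.
- by move=> m; rewrite Bp_deriv.
- move=> m; rewrite /symB I_scale I_subst ?oppr_eq0 ?oner_eq0 //.
  rewrite addNr invrN1 mulrN1 opprB -I_as_prim I_Bp.
  by case: m => [|m]; rewrite ?expr0 ?mul1r ?mulr0.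
Qed.

Definition b (p : nat) : rat := (Bp p).[2^-1].

Lemma half_eq : (-1 : rat) * 2^-1 + 1 = 2^-1.
Proof. by field. Qed.

Lemma b_odd p : odd p -> b p = 0.
Proof.
move=> Hp; have := congr1 (fun q => q.[2^-1]) (symB_eq p).
rewrite /symB /= hornerZ horner_comp !hornerE half_eq -/(b p).
rewrite -signr_odd Hp expr1 mulN1r => /eqP.
rewrite eq_sym -subr_eq0 opprK -mulr2n -mulr_natr mulf_eq0 pnatr_eq0 orbF.
by move/eqP.
Qed.

Definition mulB (p : nat) : {poly rat} :=
  ((2 : rat) ^+ p / 2) *: ((Bp p \Po ((2:rat)^-1 *: 'X + 0%:P))
                          + (Bp p \Po ((2:rat)^-1 *: 'X + (2^-1)%:P))).

Lemma mulB_eq p : mulB p = Bp p.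
Proof.
apply: (@appell_uniq mulB Bp (fun m => m.+1%:R)).
- rewrite /mulB Bp0 expr0 -polyC1 !comp_polyC .
  by rewrite -polyCD -mul_polyC -polyCM mul1r mulVf.
- move=> m; rewrite /mulB derivZ derivD !deriv_comp_aff Bp_deriv !comp_polyZ.
  rewrite !scalerA -scalerDr scalerA; congr (_ *: _); rewrite exprS; by field.
- by move=> m; rewrite Bp_deriv.
- move=> m; rewrite /mulB I_scale I_add !I_subst ?invr_eq0 //.
  have -> : (2:rat)^-1 + 2^-1 = 1 by field.
  rewrite addr0.
  set x := (prim (Bp m)).[2^-1]; set y := (prim (Bp m)).[0];
    set z := (prim (Bp m)).[1].
  have -> : (2:rat) ^+ m / 2 * ((x - y) / 2^-1 + (z - x) / 2^-1)
            = 2 ^+ m * (z - y) by field.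
  rewrite /z /y -I_as_prim I_Bp.
  by clear x y z; case: m => [|m]; rewrite ?expr0 ?mul1r ?mulr0.
Qed.

Lemma b_eq p : b p = (2 / 2 ^+ p - 1) * bernoulli p.
Proof.
have := congr1 (fun q => q.[0]) (mulB_eq p).
rewrite /mulB /= hornerZ hornerD !horner_comp !hornerE -/(b p) Bp_at0.
set c := (2:rat) ^+ p; set B := bernoulli p => H.
have Hc : c != 0 by rewrite expf_neq0.
have H' : B + b p = 2 / c * B.
  rewrite -[in RHS]H; field; exact: Hc.
rewrite mulrBl mul1r -H'; ring.
Qed.

Lemma fact_ne0 n : ((n`!)%:R : rat) != 0.
Proof. by rewrite pnatr_eq0 -lt0n fact_gt0. Qed.

Lemma natS_ne0 (a : nat) (q : nat) : (a.+1%:R + q%:R : rat) != 0.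
Proof. by rewrite -natrD pnatr_eq0. Qed.

Lemma pos_ne0 (x : rat) : 0 < x -> x != 0.
Proof. by move=> h; rewrite lt0r_neq0. Qed.

Ltac side :=
  repeat (apply/andP; split);
  try exact: fact_ne0;
  try (apply: pos_ne0; lra).

Definition J (p q : nat) : rat := I (Bp p * Bp q).

Lemma Bp_same_ends q : (Bp q.+2).[1] = (Bp q.+2).[0].
Proof. by apply/eqP; rewrite -subr_eq0 Bp_diff. Qed.

Lemma ibp p q :
  p.+1%:R * J p q.+2 + q.+2%:R * J p.+1 q.+1 =
  (p == 0%N)%:R * bernoulli q.+2.
Proof.
have := I_deriv (Bp p.+1 * Bp q.+2).
rewrite derivM !Bp_deriv -scalerAl -scalerAr I_add !I_scale -/(J p q.+2).
rewrite -/(J p.+1 q.+1) !hornerM Bp_same_ends -mulrBl Bp_diff Bp_at0 => ->.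
by [].
Qed.

Definition w (m p : nat) : rat := (p`!%:R * (m - p)`!%:R) / (m`!)%:R.

Lemma J0 q : J 0 q.+1 = 0.
Proof. by rewrite /J Bp0 mul1r I_Bp. Qed.

Lemma J_closed p q :
  J p.+1 q.+1 = (-1) ^+ p * w (p.+1 + q.+1) p.+1 * bernoulli (p.+1 + q.+1).
Proof.
elim: p q => [|p IH] q.
  have := ibp 0 q; rewrite J0 mulr0 add0r (_ : ((0%N == 0%N)%:R : rat) = 1) // mul1r => H.
  rewrite expr0 mul1r /w add1n subSS subn0 (_ : 1`! = 1)%N // mul1r.
  have Hq : (q.+2%:R : rat) != 0 by rewrite pnatr_eq0.
  apply: (@mulfI _ (q.+2%:R)) => //; rewrite H.
  rewrite (factS q.+1) natrM. field.
  by rewrite fact_ne0 /= natS_ne0.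
have := ibp p.+1 q; rewrite (_ : ((p.+1 == 0%N)%:R : rat) = 0) // mul0r IH => H.
have Hq : (q.+2%:R : rat) != 0 by rewrite pnatr_eq0.
apply: (@mulfI _ (q.+2%:R)) => //.
have -> : q.+2%:R * J p.+2 q.+1 = - (p.+2%:R * ((-1) ^+ p * w (p.+1 + q.+2) p.+1 *
      bernoulli (p.+1 + q.+2))).
  by apply/eqP; rewrite -addr_eq0 addrC H.
rewrite /w !addSn !addnS !subSS.
have -> : ((p + q).+2 - p = q.+2)%N by lia.
have -> : ((p + q).+1 - p = q.+1)%N by lia.
rewrite (factS q.+1) (factS p.+1) !natrM exprS.
have hp := ler0n rat p; have hq := ler0n rat q.
field. side.
Qed.

Lemma w_rec M p : (p <= M)%N ->
  w M p = M.+1%:R / M.+2%:R * (w M.+1 p + w M.+1 p.+1).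
Proof.
move=> Hp; rewrite /w subSn // subSS (factS p) (factS (M - p))
  (factS M) !natrM.
have hp := ler0n rat p; have hq := ler0n rat M.
have E : ((M - p).+1%:R : rat) = M%:R - p%:R + 1.
  by rewrite -natrB // -natr1.
rewrite E; field. side.
Qed.

Lemma w_1 M : w M.+1 1 = (M.+1%:R)^-1.
Proof.
rewrite /w subSS subn0 (factS M) natrM (_ : 1`! = 1)%N // mul1r.
have hq := ler0n rat M; field; side.
Qed.

Lemma w_M M : w M.+1 M = (M.+1%:R)^-1.
Proof.
rewrite /w subSn // subnn (factS M) natrM (_ : 1`! = 1)%N // mulr1.
have hq := ler0n rat M; field; side.
Qed.

Lemma tel m : \sum_(i < m.+1) (-1) ^+ i * w m.+2 i.+1
  = (1 + (-1) ^+ m) / m.+4%:R.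
Proof.
set u := fun i => (-1) ^+ i * w m.+3 i.+1.
have E : \sum_(i < m.+1) (-1) ^+ i * w m.+2 i.+1 =
   m.+3%:R / m.+4%:R * - \sum_(0 <= i < m.+1) (u i.+1 - u i).
  rewrite big_mkord -sumrN mulr_sumr; apply: eq_bigr => i _.
  rewrite (@w_rec m.+2 i.+1); last by rewrite !ltnS ltnW.
  rewrite /u exprS; ring.
rewrite E telescope_sumr // /u expr0 mul1r w_1 w_M.
have hq := ler0n rat m.
rewrite !exprS; field; side.
Qed.

Lemma Bp_deriv' p : (Bp p)^`() = p%:R *: Bp p.-1.
Proof. by case: p => [|p]; rewrite ?Bp_deriv // Bp0 -polyC1 derivC scale0r. Qed.

Definition S (m : nat) : {poly rat} := \sum_(p < m.+1) Bp p * Bp (m - p).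

Lemma S_deriv m : (S m.+1)^`() = m.+2%:R *: S m.
Proof.
rewrite /S raddf_sum /=.
under eq_bigr => i _ do rewrite derivM !Bp_deriv'.
rewrite big_split /= big_ord_recl [X in _ + X]big_ord_recr /= mulr0n scale0r mul0r add0r.
rewrite subnn mulr0n scale0r mulr0 addr0 -big_split scaler_sumr /=.
apply: eq_bigr => i _.
have Hi : (i <= m)%N by rewrite -ltnS.
rewrite /bump /= add1n subSS subSn // /= -scalerAl -scalerAr -scalerDl -natrD.
by congr (_ *: _); congr (_%:R); lia.
Qed.

Definition d (r : nat) : rat := if r is r'.+1 then I (S r') else 0.

Definition R (m : nat) : {poly rat} :=
  \sum_(r < m.+2) ('C(m.+1, r)%:R * d r) *: Bp (m.+1 - r).

Lemma R_deriv m : (R m.+1)^`() = m.+2%:R *: R m.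
Proof.
rewrite /R raddf_sum /= big_ord_recr /= subnn Bp0 derivZ -polyC1 derivC scaler0 addr0.
rewrite scaler_sumr; apply: eq_bigr => i _.
have Hi : (i <= m.+1)%N by rewrite -ltnS.
rewrite derivZ subSn // Bp_deriv !scalerA; congr (_ *: _).
have := mul_bin_down m.+2 i; rewrite /= subSn // => H.
by rewrite mulrAC -natrM mulnC -H natrM mulrA.
Qed.

Lemma I_R m : I (R m) = d m.+1.
Proof.
rewrite /R I_sum big_ord_recr /= subnn I_scale I_Bp binn mul1r mulr1.
rewrite big1 ?add0r // => i _; rewrite I_scale I_Bp.
have Hi : (i < m.+1)%N := ltn_ord i.
by rewrite subn_eq0 leqNgt Hi mulr0.
Qed.

Lemma S_eq_R m : S m = R m.
Proof.
apply: (@appell_uniq S R (fun m => m.+2%:R)).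
- rewrite /S /R big_ord1 big_ord_recr big_ord1 /= Bp0 mulr1.
  rewrite mulr0 scale0r add0r binn mul1r /S big_ord1 Bp0 mulr1 -polyC1 I_const.
  by rewrite scale1r.
- by move=> k; rewrite S_deriv.
- by move=> k; rewrite R_deriv.
- by move=> m'; rewrite I_R.
Qed.

Lemma I_S_even k : I (S (2 * k)) = bernoulli (2 * k) / k.+1%:R.
Proof.
case: k => [|j].
  rewrite /S big_ord1 Bp0 mulr1 -polyC1 I_const /bernoulli /=.
  by rewrite invr1 mulr1.
have -> : (2 * j.+1 = (2 * j).+2)%N by rewrite mulnS.
rewrite /S I_sum big_ord_recl big_ord_recr /= subn0 Bp0 mul1r I_Bp /bump /= add1n.
rewrite subnn Bp0 mulr1 I_Bp /= mulr0n addr0 add0r.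
rewrite (eq_bigr (fun i : 'I_(2*j).+1 =>
    (-1) ^+ i * w (2 * j).+2 i.+1 * bernoulli (2 * j).+2)); last first.
  move=> i _.
  have Hi : (i <= 2 * j)%N by rewrite -ltnS.
  rewrite add1n subSS subSn // -/(J _ _) J_closed.
  have -> : (i.+1 + (2 * j - i).+1 = (2 * j).+2)%N by lia.
  by [].
rewrite -mulr_suml tel.
have -> : (-1 : rat) ^+ (2 * j) = 1 by rewrite -signr_odd oddM /= expr0.
have hq := ler0n rat j.
have -> : ((2 * j).+4%:R : rat) = (2 * j.+2)%:R by congr _%:R; lia.
rewrite natrM -natr1; field; side.
Qed.

Lemma bb_eq p : bernoulli_bar p = b p.
Proof.
rewrite b_eq /bernoulli_bar.
have H2 : (2 : rat) != 0 by [].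
rewrite expfzDr // exprN1 -exprnP.
have Hc : (2 : rat) ^+ p != 0 by rewrite expf_neq0.
congr (_ * _); field; side; by rewrite expf_neq0 // intr_eq0.
Qed.

Lemma sum_even_odd (f : nat -> rat) n :
  \sum_(i < 2 * n) f i = \sum_(k < n) f (2 * k)%N + \sum_(k < n) f (2 * k).+1.
Proof.
elim: n => [|n IH]; first by rewrite !big_ord0 addr0.
have -> : (2 * n.+1 = (2 * n).+2)%N by rewrite mulnS.
rewrite !big_ord_recr /= IH.
by rewrite -!addrA; congr (_ + _); rewrite addrCA.
Qed.

Lemma star n : \sum_(k < n.+1) b (2 * k) * b (2 * n - 2 * k)
  = \sum_(k < n.+1) 'C((2 * n).+1, (2 * k).+1)%:R * (bernoulli (2 * k) / k.+1%:R)
                    * b (2 * n - 2 * k).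
Proof.
have := congr1 (fun q => q.[2^-1]) (S_eq_R (2 * n)).
rewrite /S /R !horner_sum /=.
under eq_bigr => i _ do rewrite hornerM -/(b _) -/(b _).
under [in X in _ = X -> _]eq_bigr => i _ do rewrite hornerZ -/(b _).
rewrite big_ord_recr /=.
rewrite (sum_even_odd (fun i => b i * b (2 * n - i))).
rewrite [X in _ + X + _ = _ -> _]big1; last first.
  by move=> i _; rewrite b_odd ?mul0r //= oddM.
have -> : ((2 * n).+2 = 2 * n.+1)%N by rewrite mulnS.
rewrite (sum_even_odd (fun i => 'C((2 * n).+1, i)%:R * d i * b ((2 * n).+1 - i))).
rewrite [X in _ = X + _ -> _]big1; last first.
  move=> i _; rewrite b_odd ?mulr0 //.
  have Hi : (i <= n)%N by rewrite -ltnS.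
  have -> : ((2 * n).+1 - 2 * i = (2 * (n - i)).+1)%N by lia.
  by rewrite /= oddM.
rewrite add0r addr0 => H.
rewrite big_ord_recr /= H; apply: eq_bigr => i _.
by rewrite subSS /d I_S_even.
Qed.

Theorem mainTheorem8 (n : nat) (hn : (1 <= n)%N) :
  \sum_(1 <= k < n.+1) bernoulli_bar (2 * k) * bernoulli_bar (2 * n - 2 * k)
  = (n.+1%:R)^-1 *
      \sum_(1 <= k < n.+1)
        bernoulli (2 * k) * bernoulli_bar (2 * n - 2 * k) * 'C(2 * n + 2, 2 * k + 2)%:R
    + (2 * n)%:R * bernoulli_bar (2 * n).
Proof.
have St := star n.
rewrite big_ord_recl [X in _ = X]big_ord_recl /= in St.
have b0 : b 0 = 1 by rewrite b_eq /bernoulli /=; field.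
have B0 : bernoulli 0 = 1 by [].
rewrite muln0 subn0 b0 mul1r B0 invr1 mulr1 bin1 in St.
rewrite !big_add1 /= !big_mkord bb_eq.
under eq_bigr do rewrite !bb_eq.
under [X in _ = _ * X + _]eq_bigr do rewrite !bb_eq.
rewrite /bump /= in St.
set L := \sum_(i < n) b (2 * (1 + i)) * b (2 * n - 2 * (1 + i)) in St.
set R1 := \sum_(i < n) _ in St.
have HL : \sum_(i < n) b (2 * i.+1) * b (2 * n - 2 * i.+1) = L.
  by apply: eq_bigr => i _; rewrite add1n.
rewrite HL.
have Hs : R1 = n.+1%:R^-1 * \sum_(i<n) bernoulli (2 * i.+1) *
     b (2 * n - 2 * i.+1) * 'C(2 * n + 2, 2 * i.+1 + 2)%:R.
  rewrite /R1 mulr_sumr; apply: eq_bigr => i _; rewrite add1n.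
  have := mul_bin_diag (2 * n).+2 (2 * i.+1).+1.
  rewrite !addn2 /= => Hb.
  have Hb' : ((2 * n).+2%:R * 'C((2 * n).+1, (2 * i.+1).+1)%:R : rat)
     = (2 * i.+1).+2%:R * 'C((2 * n).+2, (2 * i.+1).+2)%:R by rewrite -!natrM Hb.
  have E1 : ((2 * n).+2%:R : rat) = 2 * n.+1%:R by rewrite -natrM mulnS.
  have E2 : ((2 * i.+1).+2%:R : rat) = 2 * i.+2%:R by rewrite -natrM !mulnS.
  rewrite E1 E2 in Hb'.
  have hq := ler0n rat n; have hi := ler0n rat i.
  set C1 := 'C(_, _)%:R in Hb'; set C2 := 'C(_, _)%:R in Hb'.
  rewrite -/C1 -/C2.
  have HC2 : C2 = n.+1%:R * C1 / i.+2%:R.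
    apply: (@mulfI _ (2 * i.+2%:R)); first by side.
    rewrite -Hb'; field; side.
  rewrite HC2; field; side.
rewrite -Hs.
have E3 : ((2 * n).+1%:R : rat) = (2 * n)%:R + 1 by rewrite -natr1.
rewrite E3 in St.
lra.
Qed.
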